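(* For any sequence of points $u\in U$ converging to a vertex $p_i$, after passing to a subsequence, either $|\nabla\varphi(u)|\to\infty$ or $\nabla\varphi(u)$ converges to a point of $\partial C_{p_i}$.
   Context: $n\ge3$; $p_1,\dots,p_n\in\mathbb{R}^2_{(u_1,u_2)}$ are distinct vertices, in counterclockwise order, of a convex polygon with interior $U$; indices mod $n$. $A\ge0$, $V(u)=A+\sum_i\frac{1}{2|u-p_i|}$. For $b_1,\dots,b_n\in\mathbb{R}$, $\varphi:\overline U\to\mathbb{R}$ is the unique continuous convex function, smooth in $U$, with $\det D^2\varphi=V$ in $U$, $\varphi(p_i)=b_i$, and $\varphi$ affine linear on each edge $[p_i,p_{i+1}]$. The subgradient set at a vertex is $C_{p_i}=\{y\in\mathbb{R}^2:\varphi(u)-\varphi(p_i)\ge\langle y,u-p_i\rangle\ \forall u\in\overline U\}$. *)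

(* Defs.v *)
From Stdlib Require Import Reals Lra List.
From Coquelicot Require Import Coquelicot.
Open Scope R_scope.

Definition pt := (R * R)%type.

(* cross product of (q - p) and (r - p): > 0 iff r is strictly left of p->q *)
Definition cross (p q r : pt) : R :=
  (fst q - fst p) * (snd r - snd p) - (snd q - snd p) * (fst r - fst p).

Definition dot (y v : pt) : R := fst y * fst v + snd y * snd v.

Definition dist2 (u v : pt) : R :=
  sqrt ((fst u - fst v) ^ 2 + (snd u - snd v) ^ 2).

Definition nxt (n i : nat) : nat := ((i + 1) mod n)%nat.

Definition ccw_convex_polygon (n : nat) (p : nat -> pt) : Prop :=
  (3 <= n)%nat /\
  (forall i j, (i < n)%nat -> (j < n)%nat -> i <> j -> p i <> p j) /\
  (forall i j, (i < n)%nat -> (j < n)%nat -> j <> i -> j <> nxt n i ->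
     0 < cross (p i) (p (nxt n i)) (p j)).

Definition polyU (n : nat) (p : nat -> pt) (u : pt) : Prop :=
  forall i, (i < n)%nat -> 0 < cross (p i) (p (nxt n i)) u.
Definition polyUbar (n : nat) (p : nat -> pt) (u : pt) : Prop :=
  forall i, (i < n)%nat -> 0 <= cross (p i) (p (nxt n i)) u.

Definition Vpot (A : R) (n : nat) (p : nat -> pt) (u : pt) : R :=
  A + sum_f_R0 (fun i => / (2 * dist2 u (p i))) (n - 1).

(* partial derivatives: false = d/du1, true = d/du2 *)
Definition partial (j : bool) (f : pt -> R) : pt -> R :=
  fun x => if j then Derive (fun t => f (fst x, t)) (snd x)
           else Derive (fun t => f (t, snd x)) (fst x).

Definition ex_partial (j : bool) (f : pt -> R) (x : pt) : Prop :=
  if j then ex_derive (fun t => f (fst x, t)) (snd x)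
  else ex_derive (fun t => f (t, snd x)) (fst x).

Fixpoint iter_partial (l : list bool) (f : pt -> R) : pt -> R :=
  match l with
  | nil => f
  | cons j l2 => partial j (iter_partial l2 f)
  end.

Definition smooth_on (U : pt -> Prop) (f : pt -> R) : Prop :=
  forall (l : list bool) (x : pt), U x ->
    continuous (iter_partial l f) x /\
    (forall j, ex_partial j (iter_partial l f) x).

Definition continuous_on_set (S : pt -> Prop) (f : pt -> R) : Prop :=
  forall x, S x -> forall eps : R, 0 < eps -> exists delta : R, 0 < delta /\
    forall y, S y -> dist2 y x < delta -> Rabs (f y - f x) < eps.

Definition convex_on_set (S : pt -> Prop) (f : pt -> R) : Prop :=
  forall x y t, S x -> S y -> 0 <= t <= 1 ->
    f ((1 - t) * fst x + t * fst y, (1 - t) * snd x + t * snd y)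
      <= (1 - t) * f x + t * f y.

Definition affine_on_segment (f : pt -> R) (a c : pt) : Prop :=
  forall t, 0 <= t <= 1 ->
    f ((1 - t) * fst a + t * fst c, (1 - t) * snd a + t * snd c)
      = (1 - t) * f a + t * f c.

Definition grad (f : pt -> R) (x : pt) : pt := (partial false f x, partial true f x).

Definition hess_det (f : pt -> R) (x : pt) : R :=
  partial false (partial false f) x * partial true (partial true f) x
  - partial true (partial false f) x * partial false (partial true f) x.

Definition is_MA_solution (n : nat) (p : nat -> pt) (A : R) (b : nat -> R)
    (phi : pt -> R) : Prop :=
  continuous_on_set (polyUbar n p) phi /\
  convex_on_set (polyUbar n p) phi /\
  smooth_on (polyU n p) phi /\
  (forall u, polyU n p u -> hess_det phi u = Vpot A n p u) /\
  (forall i, (i < n)%nat -> phi (p i) = b i) /\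
  (forall i, (i < n)%nat -> affine_on_segment phi (p i) (p (nxt n i))).

Definition subgrad (n : nat) (p : nat -> pt) (phi : pt -> R) (q : pt) (y : pt) : Prop :=
  forall u, polyUbar n p u ->
    phi u - phi q >= dot y (fst u - fst q, snd u - snd q).

Definition boundary (S : pt -> Prop) (y : pt) : Prop :=
  forall eps : R, 0 < eps ->
    (exists z, S z /\ dist2 z y < eps) /\ (exists z, ~ S z /\ dist2 z y < eps).

Definition norm2 (y : pt) : R := sqrt (fst y ^ 2 + snd y ^ 2).

Definition seq_cv (u : nat -> pt) (l : pt) : Prop :=
  is_lim_seq (fun k => fst (u k)) (fst l) /\ is_lim_seq (fun k => snd (u k)) (snd l).

(* Main.v *)
Require Import Defs.
From Stdlib Require Import Reals Lra Lia Classical ClassicalEpsilon.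
From Coquelicot Require Import Coquelicot.
Open Scope R_scope.

Lemma extract (P : nat -> nat -> Prop) :
  (forall k N, exists m, (N <= m)%nat /\ P k m) ->
  exists s : nat -> nat, (forall k, (s k < s (S k))%nat) /\ forall k, P k (s k).
Proof.
  intros H.
  set (f := fun k N => proj1_sig (constructive_indefinite_description _ (H k N))).
  assert (Hf : forall k N, (N <= f k N)%nat /\ P k (f k N)).
  { intros k N. unfold f. destruct (constructive_indefinite_description _ (H k N)); auto. }
  exists (fix s k := match k with O => f O O | S k' => f (S k') (S (s k')) end).
  split.
  - intros k. simpl. destruct (Hf (S k) (S ((fix s (k0 : nat) : nat :=
       match k0 with O => f 0%nat 0%nat | S k' => f (S k') (S (s k')) end) k))). lia.
  - intros [|k]; simpl; apply Hf.
Qed.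

Lemma cross_affine (a c x y : pt) (t : R) :
  cross a c ((1 - t) * fst x + t * fst y, (1 - t) * snd x + t * snd y)
  = (1 - t) * cross a c x + t * cross a c y.
Proof. unfold cross; simpl; ring. Qed.

Lemma box_open (n : nat) (p : nat -> pt) (u : pt) : polyU n p u ->
  exists d, 0 < d /\ forall v, Rabs (fst v - fst u) < d -> Rabs (snd v - snd u) < d -> polyU n p v.
Proof.
  intros Hu.
  assert (forall m, exists d, 0 < d /\ forall v, Rabs (fst v - fst u) < d -> Rabs (snd v - snd u) < d ->
     forall j, (j < m)%nat -> (j < n)%nat -> 0 < cross (p j) (p (nxt n j)) v).
  { induction m.
    - exists 1. split; [lra|]. intros; lia.
    - destruct IHm as [d [Hd H]].
      destruct (Compare_dec.lt_dec m n) as [Hm|Hm].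
      + set (K := Rabs (fst (p (nxt n m)) - fst (p m)) + Rabs (snd (p (nxt n m)) - snd (p m)) + 1).
        set (c := cross (p m) (p (nxt n m)) u).
        assert (Hc : 0 < c) by (apply Hu; auto).
        assert (HK : 0 < K) by (unfold K; pose proof (Rabs_pos (fst (p (nxt n m)) - fst (p m)));
           pose proof (Rabs_pos (snd (p (nxt n m)) - snd (p m))); lra).
        exists (Rmin d (c / K)). split.
        { apply Rmin_glb_lt; auto. apply Rdiv_lt_0_compat; auto. }
        intros v H1 H2 j Hj Hjn.
        assert (H1d : Rabs (fst v - fst u) < d) by (eapply Rlt_le_trans; [apply H1| apply Rmin_l]).
        assert (H2d : Rabs (snd v - snd u) < d) by (eapply Rlt_le_trans; [apply H2| apply Rmin_l]).
        destruct (Nat.eq_dec j m) as [->|Hne]; [|apply H; auto; lia].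
        assert (H1c : Rabs (fst v - fst u) < c / K) by (eapply Rlt_le_trans; [apply H1| apply Rmin_r]).
        assert (H2c : Rabs (snd v - snd u) < c / K) by (eapply Rlt_le_trans; [apply H2| apply Rmin_r]).
        fold c in Hc.
        assert (E : cross (p m) (p (nxt n m)) v = c +
           ((fst (p (nxt n m)) - fst (p m)) * (snd v - snd u) - (snd (p (nxt n m)) - snd (p m)) * (fst v - fst u)))
          by (unfold c, cross; ring).
        rewrite E.
        set (a1 := fst (p (nxt n m)) - fst (p m)) in *.
        set (a2 := snd (p (nxt n m)) - snd (p m)) in *.
        assert (B : Rabs (a1 * (snd v - snd u) - a2 * (fst v - fst u)) < c).
        { eapply Rle_lt_trans. apply Rabs_triang. rewrite Rabs_Ropp, !Rabs_mult.
          assert (Rabs a1 * Rabs (snd v - snd u) <= Rabs a1 * (c/K)) by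
            (apply Rmult_le_compat_l; [apply Rabs_pos| lra]).
          assert (Rabs a2 * Rabs (fst v - fst u) <= Rabs a2 * (c/K)) by
            (apply Rmult_le_compat_l; [apply Rabs_pos| lra]).
          assert ((Rabs a1 + Rabs a2) * (c / K) < c).
          { apply (Rmult_lt_reg_r K); auto.
            replace ((Rabs a1 + Rabs a2) * (c / K) * K) with ((Rabs a1 + Rabs a2) * c) by (field; lra).
            assert (EK : K = Rabs a1 + Rabs a2 + 1) by reflexivity. rewrite EK. nra. }
          nra. }
        pose proof (Rle_abs (- (a1 * (snd v - snd u) - a2 * (fst v - fst u)))).
        rewrite Rabs_Ropp in *. lra.
      + exists d. split; auto. intros v H1 H2 j Hj Hjn. apply H; auto. lia. }
  destruct (H n) as [d [Hd Hd']]. exists d. split; auto. intros v H1 H2 j Hj. apply Hd'; auto.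
Qed.
Lemma abs_le_norm (a c : R) : Rabs a <= sqrt (a ^ 2 + c ^ 2).
Proof.
  rewrite <- (sqrt_pow2 (Rabs a)) by apply Rabs_pos.
  apply sqrt_le_1_alt. rewrite pow2_abs. pose proof (pow2_ge_0 c). lra.
Qed.

Lemma lim_of_bound (x : nat -> R) (l : R) :
  (forall k, Rabs (x k - l) < / (INR k + 1)) -> is_lim_seq x l.
Proof.
  intros H. apply is_lim_seq_spec. intros eps.
  destruct (INR_unbounded (/ eps)) as [N HN].
  exists N. intros k Hk.
  eapply Rlt_trans. apply H.
  pose proof (cond_pos eps).
  apply le_INR in Hk.
  rewrite <- (Rinv_inv eps).
  apply Rinv_lt_contravar.
  - apply Rmult_lt_0_compat. apply Rinv_0_lt_compat; auto. pose proof (pos_INR k); lra.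
  - lra.
Qed.

Lemma bw1 (a : nat -> R) M N : (forall k, (N <= k)%nat -> Rabs (a k) <= M) ->
  exists s l, (forall k, (s k < s (S k))%nat) /\ (forall k, (N <= s k)%nat) /\
    (forall k, Rabs (a (s k) - l) < / (INR k + 1)).
Proof.
  intros HM.
  destruct (Bolzano_Weierstrass (fun k => a (N + k)%nat) (fun c => - M <= c <= M) (compact_P3 _ _))
    as [l Hl].
  { intros k. pose proof (HM (N + k)%nat ltac:(lia)) as H.
    unfold Rabs in H; destruct Rcase_abs in H; lra. }
  assert (Hex : forall k N', exists m, (N' <= m)%nat /\ ((N <= m)%nat /\ Rabs (a m - l) < / (INR k + 1))).
  { intros k N'.
    assert (Hp : 0 < / (INR k + 1)) by (apply Rinv_0_lt_compat; pose proof (pos_INR k); lra).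
    destruct (Hl (disc l (mkposreal _ Hp)) N') as [q [Hq1 Hq2]].
    { exists (mkposreal _ Hp). intros z Hz; exact Hz. }
    exists (N + q)%nat. split; [lia|]. split; [lia|]. exact Hq2. }
  destruct (extract _ Hex) as [s [Hs1 Hs2]].
  exists s, l. split; auto. split; intros k; apply Hs2.
Qed.
Lemma tangent_ineq n p A b phi u v : is_MA_solution n p A b phi ->
  polyU n p u -> polyUbar n p v ->
  phi v - phi u >= dot (grad phi u) (fst v - fst u, snd v - snd u).
Proof.
  intros [Hcont [Hconv [Hsm _]]] Hu Hv.
  assert (Hub : polyUbar n p u) by (intros j Hj; left; apply Hu; auto).
  destruct (box_open n p u Hu) as [d0 [Hd0 Hbox]].
  destruct u as [u1 u2], v as [v1 v2]. unfold dot, grad; cbn [fst snd].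
  set (g1 := partial false phi (u1, u2)). set (g2 := partial true phi (u1, u2)).
  apply Rnot_lt_ge. intro Hlt.
  set (d1 := v1 - u1) in *. set (d2 := v2 - u2) in *.
  set (eps := (g1 * d1 + g2 * d2 - (phi (v1, v2) - phi (u1, u2))) / 2).
  assert (Heps : 0 < eps) by (unfold eps; lra).
  set (D := Rabs d1 + Rabs d2 + 1).
  assert (HD : 0 < D) by (unfold D; pose proof (Rabs_pos d1); pose proof (Rabs_pos d2); lra).
  set (e' := eps / D).
  assert (He' : 0 < e') by (unfold e'; apply Rdiv_lt_0_compat; auto).
  destruct (Hsm (cons false nil) (u1, u2) Hu) as [Hc1 _].
  cbn [iter_partial] in Hc1.
  destruct (Hc1 _ (locally_ball (partial false phi (u1, u2)) (mkposreal e' He'))) as [d1' Hd1'].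
  destruct (Hsm nil (u1, u2) Hu) as [_ Hex]. cbn [iter_partial] in Hex.
  pose proof (Hex true) as Hext. unfold ex_partial in Hext; cbn [fst snd] in Hext.
  pose proof (Derive_correct _ _ Hext) as Hdt.
  apply is_derive_Reals in Hdt.
  destruct (Hdt e' He') as [d2' Hd2'].
  set (del := Rmin d0 (Rmin d1' d2')).
  assert (Hdel : 0 < del) by (unfold del; repeat apply Rmin_glb_lt; auto; apply cond_pos).
  set (t := Rmin 1 (del / (2 * D))).
  assert (Ht0 : 0 < t) by (unfold t; apply Rmin_glb_lt; [lra| apply Rdiv_lt_0_compat; lra]).
  assert (Ht1 : t <= 1) by apply Rmin_l.
  assert (HtD : t * D < del).
  { assert (t <= del / (2 * D)) by apply Rmin_r.
    apply Rle_lt_trans with (del / (2 * D) * D). apply Rmult_le_compat_r; lra.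
    replace (del / (2 * D) * D) with (del / 2) by (field; lra). lra. }
  assert (Htd1 : t * Rabs d1 < del).
  { apply Rle_lt_trans with (t * D); auto. apply Rmult_le_compat_l; [lra|].
    unfold D; pose proof (Rabs_pos d2); lra. }
  assert (Htd2 : t * Rabs d2 < del).
  { apply Rle_lt_trans with (t * D); auto. apply Rmult_le_compat_l; [lra|].
    unfold D; pose proof (Rabs_pos d1); lra. }
  assert (Hdel0 : del <= d0) by apply Rmin_l.
  assert (Hdel1 : del <= d1') by (eapply Rle_trans; [apply Rmin_r| apply Rmin_l]).
  assert (Hdel2 : del <= d2') by (eapply Rle_trans; [apply Rmin_r| apply Rmin_r]).
  pose proof (Hconv (u1, u2) (v1, v2) t Hub Hv (conj (Rlt_le _ _ Ht0) Ht1)) as Hcv.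
  cbn [fst snd] in Hcv.
  set (x' := (1 - t) * u1 + t * v1) in *.
  set (w := (1 - t) * u2 + t * v2) in *.
  assert (Ex : x' - u1 = t * d1) by (unfold x', d1; ring).
  assert (Ew : w - u2 = t * d2) by (unfold w, d2; ring).
  destruct (MVT_gen (fun s => phi (s, w)) u1 x' (fun s => partial false phi (s, w))) as [c [Hc Hmvt]].
  { intros s Hs.
    assert (Hsu : polyU n p (s, w)).
    { apply Hbox; simpl.
      - assert (Rabs (s - u1) <= Rabs (x' - u1)).
        { unfold Rmin, Rmax in Hs. destruct (Rle_dec u1 x'); unfold Rabs;
          repeat destruct Rcase_abs; lra. }
        rewrite Ex, Rabs_mult, (Rabs_right t) in H by lra. lra.
      - rewrite Ew, Rabs_mult, (Rabs_right t) by lra. lra. }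
    destruct (Hsm nil (s, w) Hsu) as [_ Hx]. pose proof (Hx false) as Hx'. unfold ex_partial in Hx'; cbn [fst snd] in Hx'.
    apply (Derive_correct _ _ Hx'). }
  { intros s Hs.
    assert (Hsu : polyU n p (s, w)).
    { apply Hbox; simpl.
      - assert (Rabs (s - u1) <= Rabs (x' - u1)).
        { unfold Rmin, Rmax in Hs. destruct (Rle_dec u1 x'); unfold Rabs;
          repeat destruct Rcase_abs; lra. }
        rewrite Ex, Rabs_mult, (Rabs_right t) in H by lra. lra.
      - rewrite Ew, Rabs_mult, (Rabs_right t) by lra. lra. }
    destruct (Hsm nil (s, w) Hsu) as [_ Hx]. pose proof (Hx false) as Hx'. unfold ex_partial in Hx'; cbn [fst snd] in Hx'.
    apply continuity_pt_filterlim. apply (ex_derive_continuous _ _ Hx'). }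
  cbn beta in Hmvt.
  assert (Hcu : Rabs (c - u1) <= t * Rabs d1).
  { rewrite <- (Rabs_right t), <- Rabs_mult, <- Ex by lra.
    unfold Rmin, Rmax in Hc. destruct (Rle_dec u1 x'); unfold Rabs;
    repeat destruct Rcase_abs; lra. }
  assert (Hpc : Rabs (partial false phi (c, w) - g1) < e').
  { assert (Hb : @ball (prod_UniformSpace R_UniformSpace R_UniformSpace) (u1, u2) d1' (c, w)).
    { split.
      - change (Rabs (c - u1) < d1'). lra.
      - change (Rabs (w - u2) < d1'). rewrite Ew, Rabs_mult, (Rabs_right t) by lra. lra. }
    apply Hd1' in Hb. exact Hb. }
  assert (T1 : phi (x', w) - phi (u1, w) >= g1 * (t * d1) - e' * (t * Rabs d1)).
  { rewrite Hmvt, Ex.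
    assert (Rabs ((partial false phi (c, w) - g1) * (t * d1)) <= e' * (t * Rabs d1)).
    { rewrite Rabs_mult, Rabs_mult, (Rabs_right t) by lra.
      apply Rmult_le_compat_r; [|lra]. apply Rmult_le_pos; [lra| apply Rabs_pos]. }
    pose proof (Rle_abs (- ((partial false phi (c, w) - g1) * (t * d1)))).
    rewrite Rabs_Ropp in H0. lra. }
  assert (T2 : phi (u1, w) - phi (u1, u2) >= g2 * (t * d2) - e' * (t * Rabs d2)).
  { destruct (Req_dec d2 0) as [Hz|Hz].
    - rewrite Hz, Rmult_0_r in Ew. assert (w = u2) by lra. rewrite H, Hz. rewrite Rabs_R0. lra.
    - assert (Hh : t * d2 <> 0) by (apply Rmult_integral_contrapositive; split; lra).
      assert (Hha : Rabs (t * d2) < d2') by (rewrite Rabs_mult, (Rabs_right t) by lra; lra).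
      pose proof (Hd2' (t * d2) Hh Hha) as Hq. cbn beta in Hq. change (Derive (fun t0 => phi (u1, t0)) u2) with g2 in Hq.
      replace (u2 + t * d2) with w in Hq by lra.  change (Rabs ((phi (u1, w) - phi (u1, u2)) / (t * d2) - g2) < e') in Hq.
      assert (Hq2 : Rabs (phi (u1, w) - phi (u1, u2) - g2 * (t * d2)) <= e' * Rabs (t * d2)).
      { replace (phi (u1, w) - phi (u1, u2) - g2 * (t * d2)) with
          (((phi (u1, w) - phi (u1, u2)) / (t * d2) - g2) * (t * d2)) by (field; try split; lra).
        rewrite Rabs_mult. apply Rmult_le_compat_r; [apply Rabs_pos| lra]. }
      rewrite Rabs_mult, (Rabs_right t) in Hq2 by lra.
      pose proof (Rle_abs (- (phi (u1, w) - phi (u1, u2) - g2 * (t * d2)))).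
      rewrite Rabs_Ropp in H. lra. }
  assert (Hsum : e' * (t * Rabs d1) + e' * (t * Rabs d2) <= t * eps).
  { assert (e' * D = eps) by (unfold e'; field; lra).
    unfold D in H. pose proof (Rabs_pos d1). pose proof (Rabs_pos d2). nra. }
  assert (t * (phi (v1, v2) - phi (u1, u2)) >= t * (g1 * d1 + g2 * d2 - eps)) by lra.
  assert (phi (v1, v2) - phi (u1, u2) >= g1 * d1 + g2 * d2 - eps).
  { apply Rle_ge. apply (Rmult_le_reg_l t); lra. }
  unfold eps in H0. lra.
Qed.

Lemma vertex_Ubar n p i : ccw_convex_polygon n p -> (i < n)%nat -> polyUbar n p (p i).
Proof.
  intros [Hn [Hd Hc]] Hi j Hj.
  assert (Hnx : (nxt n j < n)%nat) by (unfold nxt; apply Nat.mod_upper_bound; lia).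
  destruct (Nat.eq_dec i j) as [->|H1].
  - unfold cross; right; ring.
  - destruct (Nat.eq_dec i (nxt n j)) as [->|H2].
    + unfold cross; right; ring.
    + left. apply Hc; auto.
Qed.

Lemma vertex_not_U n p i : ccw_convex_polygon n p -> (i < n)%nat -> ~ polyU n p (p i).
Proof.
  intros _ Hi H. specialize (H i Hi). unfold cross in H. lra.
Qed.

Lemma cont_seq (S : pt -> Prop) f (w : nat -> pt) l :
  continuous_on_set S f -> S l -> (forall k, S (w k)) -> seq_cv w l ->
  is_lim_seq (fun k => f (w k)) (f l).
Proof.
  intros Hc Hl Hw [H1 H2]. apply is_lim_seq_spec. intros eps.
  destruct (Hc l Hl eps (cond_pos eps)) as [d [Hd Hd']].
  apply is_lim_seq_spec in H1. apply is_lim_seq_spec in H2.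
  assert (Hd2 : 0 < d / 2) by lra.
  destruct (H1 (mkposreal _ Hd2)) as [N1 HN1].
  destruct (H2 (mkposreal _ Hd2)) as [N2 HN2].
  exists (N1 + N2)%nat. intros k Hk. apply Hd'; auto.
  specialize (HN1 k ltac:(lia)). specialize (HN2 k ltac:(lia)). simpl in HN1, HN2.
  unfold dist2.
  apply Rle_lt_trans with (sqrt ((Rabs (fst (w k) - fst l) + Rabs (snd (w k) - snd l)) ^ 2)).
  - apply sqrt_le_1_alt. rewrite <- (pow2_abs (fst (w k) - fst l)), <- (pow2_abs (snd (w k) - snd l)).
    pose proof (Rabs_pos (fst (w k) - fst l)). pose proof (Rabs_pos (snd (w k) - snd l)). nra.
  - rewrite sqrt_pow2 by (pose proof (Rabs_pos (fst (w k) - fst l)); pose proof (Rabs_pos (snd (w k) - snd l)); lra).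
    lra.
Qed.

Lemma strict_mono (s : nat -> nat) : (forall k, (s k < s (S k))%nat) -> forall a c, (a < c)%nat -> (s a < s c)%nat.
Proof.
  intros H a c Hac. induction Hac. apply H. specialize (H m). lia.
Qed.

Lemma key n p A b phi i (w : nat -> pt) y :
  ccw_convex_polygon n p -> is_MA_solution n p A b phi -> (i < n)%nat ->
  (forall k, polyU n p (w k)) -> seq_cv w (p i) ->
  seq_cv (fun k => grad phi (w k)) y -> boundary (subgrad n p phi (p i)) y.
Proof.
  intros Hpoly Hsol Hi Hw Hwc Hg.
  pose proof (vertex_Ubar n p i Hpoly Hi) as Hpi.
  assert (Hwb : forall k, polyUbar n p (w k)) by (intros k j Hj; left; apply Hw; auto).
  assert (Hphil : is_lim_seq (fun k => phi (w k)) (phi (p i))).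
  { destruct Hsol as [Hc _]. apply (cont_seq _ _ _ _ Hc Hpi Hwb Hwc). }
  destruct Hwc as [Hw1 Hw2]. destruct Hg as [Hg1 Hg2].
  assert (HyC : subgrad n p phi (p i) y).
  { intros v Hv.
    set (F := fun k => phi v - phi (w k) - (fst (grad phi (w k)) * (fst v - fst (w k)) +
                                           snd (grad phi (w k)) * (snd v - snd (w k)))).
    assert (HF : forall k, 0 <= F k).
    { intros k. pose proof (tangent_ineq n p A b phi (w k) v Hsol (Hw k) Hv) as T.
      unfold dot in T; cbn [fst snd] in T. unfold F. lra. }
    assert (HFl : is_lim_seq F (phi v - phi (p i) - (fst y * (fst v - fst (p i)) + snd y * (snd v - snd (p i))))).
    { unfold F.
      apply (is_lim_seq_minus' (fun k => phi v - phi (w k))).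
      - apply (is_lim_seq_minus' (fun _ => phi v)). apply is_lim_seq_const. exact Hphil.
      - apply (is_lim_seq_plus' (fun k => fst (grad phi (w k)) * (fst v - fst (w k)))
                                (fun k => snd (grad phi (w k)) * (snd v - snd (w k)))).
        + apply (is_lim_seq_mult' (fun k => fst (grad phi (w k)))); auto.
          apply (is_lim_seq_minus' (fun _ => fst v)). apply is_lim_seq_const. exact Hw1.
        + apply (is_lim_seq_mult' (fun k => snd (grad phi (w k)))); auto.
          apply (is_lim_seq_minus' (fun _ => snd v)). apply is_lim_seq_const. exact Hw2. }
    pose proof (is_lim_seq_le (fun _ => 0) F 0 _ HF (is_lim_seq_const 0) HFl) as Hle.
    simpl in Hle. unfold dot; simpl. lra. }
  intros eps Heps. split.
  { exists y. split; auto. unfold dist2.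
    replace ((fst y - fst y) ^ 2 + (snd y - snd y) ^ 2) with 0 by ring. rewrite sqrt_0. lra. }
  apply NNPP. intro Hno.
  assert (Hall : forall z, dist2 z y < eps -> subgrad n p phi (p i) z).
  { intros z Hz. apply NNPP. intro Hnz. apply Hno. exists z. auto. }
  set (r := eps / 2).
  assert (Hr : 0 < r) by (unfold r; lra).
  assert (Hr3 : 0 < r / 3) by lra.
  apply is_lim_seq_spec in Hg1. apply is_lim_seq_spec in Hg2.
  destruct (Hg1 (mkposreal _ Hr3)) as [N1 HN1].
  destruct (Hg2 (mkposreal _ Hr3)) as [N2 HN2].
  set (k := (N1 + N2)%nat).
  specialize (HN1 k ltac:(unfold k; lia)). specialize (HN2 k ltac:(unfold k; lia)).
  cbn [pos] in HN1, HN2.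
  set (e1 := fst (w k) - fst (p i)). set (e2 := snd (w k) - snd (p i)).
  set (g1 := fst (grad phi (w k))) in *. set (g2 := snd (grad phi (w k))) in *.
  assert (Hpos : 0 < e1 ^ 2 + e2 ^ 2).
  { destruct (Rle_lt_dec (e1 ^ 2 + e2 ^ 2) 0) as [H0|H0]; auto.
    exfalso. assert (e1 = 0) by nra. assert (e2 = 0) by nra.
    apply (vertex_not_U n p i Hpoly Hi).
    replace (p i) with (w k); auto.
    destruct (w k) as [a1 a2] eqn:E, (p i) as [c1 c2]. unfold e1, e2 in *. simpl in *.
    f_equal; lra. }
  set (Ne := sqrt (e1 ^ 2 + e2 ^ 2)).
  assert (HNe : 0 < Ne) by (apply sqrt_lt_R0; auto).
  assert (HNe2 : Ne * Ne = e1 ^ 2 + e2 ^ 2) by (apply sqrt_sqrt; lra).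
  set (z := (fst y + r * e1 / Ne, snd y + r * e2 / Ne)).
  assert (Hz : dist2 z y = r).
  { unfold dist2, z; cbn [fst snd].
    replace ((fst y + r * e1 / Ne - fst y) ^ 2 + (snd y + r * e2 / Ne - snd y) ^ 2) with (r ^ 2).
    - apply sqrt_pow2; lra.
    - replace ((fst y + r * e1 / Ne - fst y) ^ 2 + (snd y + r * e2 / Ne - snd y) ^ 2) with (r ^ 2 * (e1 ^ 2 + e2 ^ 2) / (Ne * Ne)) by (field; lra). rewrite <- HNe2. field. lra. }
  assert (HzC : subgrad n p phi (p i) z) by (apply Hall; rewrite Hz; unfold r; lra).
  specialize (HzC (w k) (Hwb k)). unfold dot, z in HzC; cbn [fst snd] in HzC. fold e1 e2 in HzC.
  pose proof (tangent_ineq n p A b phi (w k) (p i) Hsol (Hw k) Hpi) as T.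
  unfold dot in T; cbn [fst snd] in T. fold g1 g2 in T.
  assert (Hsum : (g1 - fst y) * e1 + (g2 - snd y) * e2 >= r * Ne).
  { replace (r * Ne) with (r * e1 / Ne * e1 + r * e2 / Ne * e2).
    - replace (fst (p i) - fst (w k)) with (- e1) in T by (unfold e1; ring).
      replace (snd (p i) - snd (w k)) with (- e2) in T by (unfold e2; ring). nra.
    - replace (r * e1 / Ne * e1 + r * e2 / Ne * e2) with (r * (e1 ^ 2 + e2 ^ 2) / Ne) by (field; lra). rewrite <- HNe2. field. lra. }
  assert (He1 : Rabs e1 <= Ne) by apply abs_le_norm.
  assert (He2 : Rabs e2 <= Ne) by (unfold Ne; rewrite Rplus_comm; apply abs_le_norm).
  assert (B1 : (g1 - fst y) * e1 <= r / 3 * Ne).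
  { eapply Rle_trans. apply Rle_abs. rewrite Rabs_mult.
    apply Rmult_le_compat; try apply Rabs_pos; lra. }
  assert (B2 : (g2 - snd y) * e2 <= r / 3 * Ne).
  { eapply Rle_trans. apply Rle_abs. rewrite Rabs_mult.
    apply Rmult_le_compat; try apply Rabs_pos; lra. }
  nra.
Qed.

Lemma abs_fst_le (y : pt) : Rabs (fst y) <= norm2 y.
Proof. apply abs_le_norm. Qed.
Lemma abs_snd_le (y : pt) : Rabs (snd y) <= norm2 y.
Proof. unfold norm2. rewrite Rplus_comm. apply abs_le_norm. Qed.

Theorem mainTheorem8 (n : nat) (p : nat -> pt) (A : R) (b : nat -> R)
    (phi : pt -> R) (i : nat) (u : nat -> pt) :
  ccw_convex_polygon n p -> 0 <= A ->
  is_MA_solution n p A b phi ->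
  (i < n)%nat ->
  (forall k, polyU n p (u k)) ->
  seq_cv u (p i) ->
  exists s : nat -> nat, (forall k, (s k < s (S k))%nat) /\
    (is_lim_seq (fun k => norm2 (grad phi (u (s k)))) p_infty \/
     exists y, boundary (subgrad n p phi (p i)) y /\
               seq_cv (fun k => grad phi (u (s k))) y).
Proof.
  intros Hpoly HA Hsol Hi Hu Hcv.
  destruct (classic (forall M N, exists k, (N <= k)%nat /\ INR M < norm2 (grad phi (u k)))) as [Hunb|Hb].
  - destruct (extract (fun M k => INR M < norm2 (grad phi (u k))) Hunb) as [s [Hs1 Hs2]].
    exists s. split; auto. left.
    apply is_lim_seq_spec. intros M.
    destruct (INR_unbounded M) as [N HN]. exists N. intros k Hk.
    apply le_INR in Hk. specialize (Hs2 k). lra.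
  - assert (HB : exists M N, forall k, (N <= k)%nat -> norm2 (grad phi (u k)) <= INR M).
    { apply NNPP. intro Hc. apply Hb. intros M N. apply NNPP. intro Hc2. apply Hc.
      exists M, N. intros k Hk. apply Rnot_lt_le. intro Hlt. apply Hc2. exists k. auto. }
    destruct HB as [M [N HMN]].
    destruct (bw1 (fun k => fst (grad phi (u k))) (INR M) N) as [s1 [l1 [Hs1 [HsN Hl1]]]].
    { intros k Hk. eapply Rle_trans. apply abs_fst_le. auto. }
    destruct (bw1 (fun k => snd (grad phi (u (s1 k)))) (INR M) 0) as [s2 [l2 [Hs2 [_ Hl2]]]].
    { intros k _. eapply Rle_trans. apply abs_snd_le. apply HMN. auto. }
    exists (fun k => s1 (s2 k)). split.
    { intros k. apply strict_mono; auto. }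
    right. exists (l1, l2).
    assert (Hc : seq_cv (fun k => grad phi (u (s1 (s2 k)))) (l1, l2)).
    { split; simpl.
      - apply (is_lim_seq_subseq (fun j => fst (grad phi (u (s1 j))))).
        + apply eventually_subseq; auto.
        + apply lim_of_bound. exact Hl1.
      - apply lim_of_bound. exact Hl2. }
    split; auto.
    assert (Hss : forall k, ((fun k => s1 (s2 k)) k < (fun k => s1 (s2 k)) (S k))%nat)
      by (intros k; apply strict_mono; auto).
    apply (key n p A b phi i (fun k => u (s1 (s2 k))) (l1, l2) Hpoly Hsol Hi); auto.
    destruct Hcv as [Hc1 Hc2]. split.
    + apply (is_lim_seq_subseq (fun k => fst (u k))); auto. apply eventually_subseq; auto.
    + apply (is_lim_seq_subseq (fun k => snd (u k))); auto. apply eventually_subseq; auto.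
Qed.
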